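(* For all blueprints $\alpha,\beta,\beta'$: if $\alpha\Uparrow\beta$ and $\beta\sqsubseteq_1\beta'$, then there exists a blueprint $\alpha'$ such that $\alpha\sqsubseteq_1\alpha'$ and $\alpha'\Uparrow\beta'$.
   Context: Addresses are finite sequences of positive integers with prefix order $\le$ ($<$ strict), concatenation $\cdot$, empty address $\varepsilon$. A partial tree is a function on a set of addresses; $\pi|_a$ is $c\mapsto\pi(a\cdot c)$; $\pi[a\leftarrow\pi']$ is the partial tree $\pi''$ with $\pi''|_a=\pi'$ and $\pi''(b)=\pi(b)$ for $b\in\mathrm{dom}(\pi)$ with $a\not\le b$. $\mathfrak S$ consists of all formulas (arity 0) and symbols $@_\phi$ (arity 2). A blueprint is a finite partial tree with values in $\mathfrak S$ such that if $\alpha(a)=@_\phi$ then $\alpha|_{a\cdot(1)},\alpha|_{a\cdot(2)}$ are non-empty. Notation: $\emptyset_{\mathbb B}$ empty blueprint; $\phi$ denotes $\varepsilon\mapsto\phi$; $@_\phi(\alpha_1,\alpha_2)$ ($\alpha_i$ non-empty) has root $@_\phi$ and $\alpha_i$ at $(i)$; for pairwise incomparable $\bar a=(a_1,\dots,a_k)$, $*_{\bar a}(\alpha_1,\dots,\alpha_k)$ is the blueprint of minimal domain whose restriction at $a_i$ is $\alpha_i$. $\Uparrow$ is the least reflexive transitive relation with $\beta[a\leftarrow\beta|_b]\Uparrow\beta$ whenever $a,b\in\mathrm{dom}(\beta)$, $a<b$, $\beta(a)=\beta(b)$. $\equiv$ is the least relation with: $\emptyset_{\mathbb B}\equiv\emptyset_{\mathbb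 B}$; $\phi\equiv\phi$; $@_\phi(\alpha_1,\alpha_2)\equiv@_\phi(\beta_1,\beta_2)$ if $\alpha_i\equiv\beta_i$; $*_{\bar a}(\alpha_1,\dots,\alpha_n)\equiv*_{\bar b}(\beta_1,\dots,\beta_n)$ if $\alpha_i\equiv\beta_i$ for all $i$ (with $\bar a,\bar b$ pairwise-incomparable sequences of length $n$, not both $(\varepsilon)$, and some $\alpha_i,\beta_i$ non-empty). $\curvearrowleft_m$ is the least relation with: (1) if $\gamma_1\equiv\dots\equiv\gamma_{m+1}\not\equiv\emptyset_{\mathbb B}$ then $*_{\bar a}(\gamma_1,\dots,\gamma_m)\curvearrowleft_m*_{\bar a\cdot(b)}(\gamma_1,\dots,\gamma_{m+1})$; (2) if $\alpha=*_{\bar a}(\alpha_1,\dots,\alpha_n)$, $\beta=*_{\bar b}(\beta_1,\dots,\beta_p)$, $\alpha\curvearrowleft_m\beta$, $\gamma$ non-empty, then $@_\phi(\alpha,\gamma)\curvearrowleft_m@_\phi(\beta,\gamma)$, $@_\phi(\gamma,\alpha)\curvearrowleft_m@_\phi(\gamma,\beta)$, $*_{\bar a\cdot(c)}(\alpha_1,\dots,\alpha_n,\gamma)\curvearrowleft_m*_{\bar b\cdot(c)}(\beta_1,\dots,\beta_p,\gamma)$. $\sqsubseteq_m$ is the reflexive transitive closure of $\equiv\cup\curvearrowleft_m$. *)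

(* Defs.v *)
From mathcomp Require Import all_boot.
Set Implicit Arguments. Unset Strict Implicit. Unset Printing Implicit Defensive.

(** Addresses: finite sequences of positive integers (positivity is imposed
    wherever an address is used: domains of blueprints, index tuples of star). *)
Definition address := seq nat.
Definition addr_ok (a : address) : bool := all (fun i => 0 < i) a.

Definition addr_le (a b : address) : bool := prefix a b.
Definition addr_lt (a b : address) : bool := prefix a b && (a != b).

Section Blueprints.
Variable F : Type. (* the type of formulas *)

(** The signature S: formulas (arity 0) and symbols @_phi (arity 2). *)
Inductive sym := Form of F | App of F.

(** Partial trees: functions on a set of addresses (None = undefined). *)
Definition ptree := address -> option sym.

Definition restrict (p : ptree) (a : address) : ptree := fun c => p (a ++ c).

Definition graft (p : ptree) (a : address) (p' : ptree) : ptree :=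
  fun b => if addr_le a b then p' (drop (size a) b) else p b.

Definition nonempty (p : ptree) : Prop := exists a, p a <> None.

Definition blueprint (p : ptree) : Prop :=
  [/\ (exists s : seq address, forall a, p a <> None -> a \in s),
      (forall a, p a <> None -> addr_ok a) &
      (forall a phi, p a = Some (App phi) ->
         nonempty (restrict p (rcons a 1)) /\ nonempty (restrict p (rcons a 2)))].

Definition bempty : ptree := fun _ => None.
Definition bform (phi : F) : ptree := fun a => if a == [::] then Some (Form phi) else None.
Definition bapp (phi : F) (a1 a2 : ptree) : ptree := fun a =>
  match a with
  | [::] => Some (App phi)
  | i :: c => if i == 1 then a1 c else if i == 2 then a2 c else None
  end.

(** *_abar(alpha_1,...,alpha_k), given as the list of pairs (a_i, alpha_i);
    the blueprint of minimal domain whose restriction at a_i is alpha_i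
    (meaningful when the a_i are pairwise incomparable, see star_ok). *)
Definition bstar (s : seq (address * ptree)) : ptree := fun b =>
  match [seq x <- s | addr_le x.1 b] with
  | x :: _ => x.2 (drop (size x.1) b)
  | [::] => None
  end.

Definition incomparable (a b : address) : bool := ~~ addr_le a b && ~~ addr_le b a.

Definition star_ok (s : seq (address * ptree)) : Prop :=
  all addr_ok (map fst s) /\ pairwise incomparable (map fst s).

Inductive rtc (R : ptree -> ptree -> Prop) : ptree -> ptree -> Prop :=
| rtc_refl x : rtc R x x
| rtc_step x y : R x y -> rtc R x y
| rtc_trans x y z : rtc R x y -> rtc R y z -> rtc R x z.

Inductive up_step : ptree -> ptree -> Prop :=
| up_step_intro (beta : ptree) (a b : address) :
    beta a <> None -> beta b <> None -> addr_lt a b -> beta a = beta b ->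
    up_step (graft beta a (restrict beta b)) beta.

Definition up := rtc up_step.

Definition nth_bp (s : seq (address * ptree)) (i : nat) : ptree :=
  (nth ([::], bempty) s i).2.

Inductive bequiv : ptree -> ptree -> Prop :=
| bequiv_empty : bequiv bempty bempty
| bequiv_form phi : bequiv (bform phi) (bform phi)
| bequiv_app phi a1 a2 b1 b2 :
    nonempty a1 -> nonempty a2 -> nonempty b1 -> nonempty b2 ->
    bequiv a1 b1 -> bequiv a2 b2 -> bequiv (bapp phi a1 a2) (bapp phi b1 b2)
| bequiv_star (sa sb : seq (address * ptree)) :
    size sa = size sb -> star_ok sa -> star_ok sb ->
    ~ (map fst sa = [:: [::]] /\ map fst sb = [:: [::]]) ->
    (forall i, i < size sa -> bequiv (nth_bp sa i) (nth_bp sb i)) ->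
    (exists2 i, i < size sa & nonempty (nth_bp sa i) /\ nonempty (nth_bp sb i)) ->
    bequiv (bstar sa) (bstar sb).

Inductive bcyc (m : nat) : ptree -> ptree -> Prop :=
| bcyc_base (abar : seq address) (b : address) (gs : seq ptree) :
    size abar = m -> size gs = m.+1 ->
    star_ok (zip (rcons abar b) gs) ->
    (forall i, i < m -> bequiv (nth bempty gs i) (nth bempty gs i.+1)) ->
    ~ bequiv (nth bempty gs m) bempty ->
    bcyc m (bstar (zip abar (take m gs))) (bstar (zip (rcons abar b) gs))
| bcyc_app_l phi (sa sb : seq (address * ptree)) (g : ptree) :
    star_ok sa -> star_ok sb -> bcyc m (bstar sa) (bstar sb) ->
    blueprint g -> nonempty g -> nonempty (bstar sa) -> nonempty (bstar sb) ->
    bcyc m (bapp phi (bstar sa) g) (bapp phi (bstar sb) g)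
| bcyc_app_r phi (sa sb : seq (address * ptree)) (g : ptree) :
    star_ok sa -> star_ok sb -> bcyc m (bstar sa) (bstar sb) ->
    blueprint g -> nonempty g -> nonempty (bstar sa) -> nonempty (bstar sb) ->
    bcyc m (bapp phi g (bstar sa)) (bapp phi g (bstar sb))
| bcyc_star (sa sb : seq (address * ptree)) (c : address) (g : ptree) :
    star_ok sa -> star_ok sb -> bcyc m (bstar sa) (bstar sb) ->
    blueprint g -> nonempty g ->
    star_ok (rcons sa (c, g)) -> star_ok (rcons sb (c, g)) ->
    bcyc m (bstar (rcons sa (c, g))) (bstar (rcons sb (c, g))).

Definition bsqsub (m : nat) : ptree -> ptree -> Prop :=
  rtc (fun x y => bequiv x y \/ bcyc m x y).

End Blueprints.

(* Main.v *)
Require Import Defs.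
From mathcomp Require Import all_boot.
From Stdlib Require Import FunctionalExtensionality.
Set Implicit Arguments. Unset Strict Implicit. Unset Printing Implicit Defensive.
Set Bullet Behavior "Strict Subproofs".

Definition coll {F} (X : ptree F) a b := graft X a (restrict X b).
Definition cc {F} (X : ptree F) (a b : address) :=
  [/\ X a <> None, X b <> None, addr_lt a b & X a = X b].

Lemma preP (a x : address) : prefix a x -> x = a ++ drop (size a) x.
Proof. by case/prefixP=> s ->; rewrite drop_size_cat. Qed.

Lemma pre_cmp (a c x : address) : prefix a x -> prefix c x -> prefix a c \/ prefix c a.
Proof.
move=> pa pc; move: pa pc; rewrite [prefix a x]prefixE [prefix c x]prefixE => /eqP ha /eqP hc.
case: (leqP (size a) (size c)) => h.
- left; rewrite prefixE; apply/eqP.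
  by rewrite -hc -take_min (minn_idPl h).
- right; rewrite prefixE; apply/eqP.
  by rewrite -ha -take_min (minn_idPl (ltnW h)).
Qed.

Lemma incomp_pre (a c x : address) : incomparable a c -> prefix a x -> prefix c x -> False.
Proof. by case/andP=> /negP h1 /negP h2 p1 p2; case: (pre_cmp p1 p2). Qed.

Lemma pre_cat (a c : address) : prefix a (a ++ c). Proof. exact: prefix_prefix. Qed.

Lemma addr_ok_cat a b : addr_ok (a ++ b) = addr_ok a && addr_ok b.
Proof. exact: all_cat. Qed.

Lemma graft_in F (T : ptree F) p Z c : graft T p Z (p ++ c) = Z c.
Proof. by rewrite /graft /addr_le pre_cat drop_size_cat. Qed.

Lemma graft_out F (T : ptree F) p Z x : ~~ prefix p x -> graft T p Z x = T x.
Proof. by rewrite /graft /addr_le => /negbTE ->. Qed.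

Lemma graft_pre F (T : ptree F) p Z x : prefix p x -> graft T p Z x = Z (drop (size p) x).
Proof. by rewrite /graft /addr_le => ->. Qed.

Lemma pre_rcons_cases (c a : address) i :
  prefix a (rcons c i) -> prefix a c \/ a = rcons c i.
Proof.
case/prefixP=> u; case/lastP: u => [|u x]; first by rewrite cats0 => ->; right.
rewrite -rcons_cat => /rcons_inj [-> _]; left; exact: pre_cat.
Qed.

Lemma coll_at F (Y : ptree F) a b c : coll Y a b (a ++ c) = Y (b ++ c).
Proof. by rewrite /coll graft_in. Qed.

Lemma coll_out F (Y : ptree F) a b x : ~~ prefix a x -> coll Y a b x = Y x.
Proof. exact: graft_out. Qed.

Lemma coll_ne_sub F (Y : ptree F) a b c i e :
  Y a <> None -> Y b <> None -> ~~ prefix a c -> Y (rcons c i ++ e) <> None ->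
  nonempty (restrict (coll Y a b) (rcons c i)).
Proof.
move=> ha hb pc he.
case: (boolP (prefix (rcons c i) a)) => pa.
- exists (drop (size (rcons c i)) a); rewrite /restrict -(preP pa).
  by have := coll_at Y a b [::]; rewrite !cats0 => ->.
- exists e; rewrite /restrict coll_out //; apply/negP => h.
  case: (pre_cmp h (pre_cat (rcons c i) e)) => h2.
  + case: (pre_rcons_cases h2) => [h3|h3]; first by rewrite h3 in pc.
    by rewrite h3 prefix_refl in pa.
  + by rewrite h2 in pa.
Qed.

Lemma coll_bp F (Y : ptree F) a b : cc Y a b -> blueprint Y -> blueprint (coll Y a b).
Proof.
case=> ha hb /andP[pab nab] eab [[s hs] hok happ]; split.
- exists (s ++ map (fun y => a ++ drop (size b) y) s) => x.
  case: (boolP (prefix a x)) => px.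
  + rewrite (preP px) coll_at => hx; rewrite mem_cat; apply/orP; right.
    apply/mapP; exists (b ++ drop (size a) x); first exact: hs.
    by rewrite drop_size_cat.
  + by rewrite coll_out // => hx; rewrite mem_cat hs.
- move=> x; case: (boolP (prefix a x)) => px.
  + rewrite (preP px) coll_at => hx; rewrite addr_ok_cat (hok a ha) /=.
    by have:= hok _ hx; rewrite addr_ok_cat; case/andP.
  + rewrite coll_out //; exact: hok.
- move=> c phi; case: (boolP (prefix a c)) => pc.
  + case/prefixP: pc => d ->; rewrite coll_at => hc.
    have [[e1 h1] [e2 h2]] := happ _ _ hc.
    split; [exists e1 | exists e2]; rewrite /restrict rcons_cat -catA coll_at;
      by rewrite catA -rcons_cat.
  + rewrite coll_out // => hc.
    have [[e1 h1] [e2 h2]] := happ _ _ hc.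
    by split; apply: coll_ne_sub; eauto.
Qed.

Lemma up_bp F (X Y : ptree F) : up X Y -> blueprint Y -> blueprint X.
Proof.
elim=> // [x y [] beta a b ha hb hab hea | x y z _ IH1 _ IH2] hbp.
- by apply: (@coll_bp _ beta a b).
- by apply: IH1; apply: IH2.
Qed.

Lemma incompC a c : incomparable a c = incomparable c a.
Proof. by rewrite /incomparable andbC. Qed.

Lemma pairwise_nth (T : Type) (r : rel T) (x0 : T) xs i j :
  (forall x y, r x y -> r y x) ->
  pairwise r xs -> i < size xs -> j < size xs -> i != j ->
  r (nth x0 xs i) (nth x0 xs j).
Proof.
move=> sym; elim: xs i j => [|x xs IH] [|i] [|j] //=;
  case/andP=> ha hp; rewrite ?ltnS => hi hj hij.
- by move/(all_nthP x0): ha; apply.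
- by apply: sym; move/(all_nthP x0): ha; apply.
- by apply: IH.
Qed.

Definition adr F (s : seq (address * ptree F)) i := (nth ([::], bempty F) s i).1.

Lemma nth_bpE F (s : seq (address * ptree F)) i : nth_bp s i = (nth ([::], bempty F) s i).2.
Proof. by []. Qed.

Lemma adr_incomp F (s : seq (address * ptree F)) i j :
  pairwise incomparable (map fst s) -> i < size s -> j < size s -> i != j ->
  incomparable (adr s i) (adr s j).
Proof.
move=> hp hi hj hij; rewrite /adr -!(nth_map _ [::] fst) //.
apply: pairwise_nth => //; last by rewrite size_map.
- by move=> x y; rewrite incompC.
- by rewrite size_map.
Qed.

Lemma bstar_cons_in F (y : address * ptree F) s x :
  prefix y.1 x -> bstar (y :: s) x = y.2 (drop (size y.1) x).
Proof. by rewrite /bstar /= /addr_le => ->. Qed.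

Lemma bstar_cons_out F (y : address * ptree F) s x :
  ~~ prefix y.1 x -> bstar (y :: s) x = bstar s x.
Proof. by rewrite /bstar /= /addr_le => /negbTE ->. Qed.

Lemma bstar_nth F (s : seq (address * ptree F)) i x :
  pairwise incomparable (map fst s) -> i < size s -> prefix (adr s i) x ->
  bstar s x = nth_bp s i (drop (size (adr s i)) x).
Proof.
elim: s i => [|y s IH] [|i] //= hp hi hx; first by rewrite bstar_cons_in.
case/andP: hp => ha hp.
rewrite bstar_cons_out; first by apply: IH.
apply/negP => hy; move/allP: ha => /(_ (adr s i)).
rewrite /adr -(nth_map _ [::] fst) // mem_nth ?size_map // => /(_ isT) hinc.
by apply: (incomp_pre hinc hy); rewrite (nth_map ([::], bempty F)).
Qed.

Lemma bstar_none F (s : seq (address * ptree F)) x :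
  (forall j, j < size s -> ~~ prefix (adr s j) x) -> bstar s x = None.
Proof.
elim: s => [|y s IH] //= h; rewrite bstar_cons_out; first apply: IH.
- by move=> j hj; apply: (h j.+1).
- exact: (h 0).
Qed.

Lemma bstar_some F (s : seq (address * ptree F)) x :
  bstar s x <> None -> exists2 j, j < size s & prefix (adr s j) x.
Proof.
move=> h; case: (boolP (has (fun y => prefix y.1 x) s)).
- by case/(has_nthP ([::], bempty F)) => j hj hp; exists j.
- move=> hn; exfalso; apply: h; apply: bstar_none => j hj.
  by apply/negP => hp; move/negP: hn; apply; apply/(has_nthP ([::], bempty F)); exists j.
Qed.

Lemma bstar_rcons_out F (s : seq (address * ptree F)) c g x :
  ~~ prefix c x -> bstar (rcons s (c, g)) x = bstar s x.
Proof.
move=> h; rewrite /bstar filter_rcons /addr_le /= (negbTE h) //.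
Qed.

Lemma star_ok_pw F (s : seq (address * ptree F)) : star_ok s -> pairwise incomparable (map fst s).
Proof. by case. Qed.

Lemma star_ok_fst F G (s : seq (address * ptree F)) (s' : seq (address * ptree G)) :
  map fst s = map fst s' -> star_ok s -> star_ok s'.
Proof. by move=> e [h1 h2]; split; rewrite -e. Qed.

Lemma bstar_rcons F (s : seq (address * ptree F)) c g :
  pairwise incomparable (map fst (rcons s (c, g))) ->
  bstar (rcons s (c, g)) = graft (bstar s) c g.
Proof.
move=> hp; apply: functional_extensionality => x.
case: (boolP (prefix c x)) => hx.
- rewrite graft_pre // (@bstar_nth _ _ (size s)) ?size_rcons //;
   by rewrite /adr /nth_bp nth_rcons ltnn eqxx.
- by rewrite graft_out // bstar_rcons_out.
Qed.

Lemma bstar1 F c (g : ptree F) : bstar [:: (c, g)] = graft (bempty F) c g.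
Proof.
apply: functional_extensionality => x; rewrite /bstar /graft /=.
by case: (addr_le c x).
Qed.

Lemma star_self F (s : seq (address * ptree F)) i :
  pairwise incomparable (map fst s) -> i < size s ->
  bstar s = graft (bstar s) (adr s i) (nth_bp s i).
Proof.
move=> hp hi; apply: functional_extensionality => x.
case: (boolP (prefix (adr s i) x)) => hx; last by rewrite graft_out.
by rewrite graft_pre // (bstar_nth hp hi hx).
Qed.

Lemma map_fst_set F (s : seq (address * ptree F)) i v :
  i < size s -> map fst (set_nth ([::], bempty F) s i (adr s i, v)) = map fst s.
Proof.
move=> hi; apply: (@eq_from_nth _ [::]); first by rewrite !size_map size_set_nth (maxn_idPr hi).
move=> j; rewrite size_map size_set_nth (maxn_idPr hi) => hj.
rewrite !(nth_map ([::], bempty F)) ?size_set_nth ?(maxn_idPr hi) // nth_set_nth /=.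
by case: eqP => // ->.
Qed.

Lemma size_set F (s : seq (address * ptree F)) i v :
  i < size s -> size (set_nth ([::], bempty F) s i v) = size s.
Proof. by move=> hi; rewrite size_set_nth (maxn_idPr hi). Qed.

Lemma bstar_set F (s : seq (address * ptree F)) i v :
  pairwise incomparable (map fst s) -> i < size s ->
  bstar (set_nth ([::], bempty F) s i (adr s i, v)) = graft (bstar s) (adr s i) v.
Proof.
move=> hp hi; have hp' := hp; rewrite -(map_fst_set v hi) in hp'.
have adrE j : adr (set_nth ([::], bempty F) s i (adr s i, v)) j = adr s j.
  rewrite /adr nth_set_nth /=; case: eqP => [->|] //.
apply: functional_extensionality => x.
case: (boolP (prefix (adr s i) x)) => hx.
- rewrite graft_pre // (@bstar_nth _ _ i) ?size_set ?adrE //.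
  by rewrite /nth_bp nth_set_nth /= eqxx.
- rewrite graft_out //.
  case: (boolP (has (fun y => prefix y.1 x) s)).
  + case/(has_nthP ([::], bempty F)) => j hj hpj.
    have hij : j != i by apply/eqP => e; rewrite e in hpj; rewrite hpj in hx.
    rewrite (@bstar_nth _ _ j) ?size_set ?adrE //.
    rewrite (@bstar_nth _ _ j) //.
    by rewrite /nth_bp nth_set_nth /= (negbTE hij).
  + move=> hn; have H j : j < size s -> ~~ prefix (adr s j) x.
      move=> hj; apply/negP => hpj; move/negP: hn; apply.
      by apply/(has_nthP ([::], bempty F)); exists j.
    rewrite !bstar_none // => j; rewrite ?size_set // adrE; exact: H.
Qed.

Lemma incomp_ext a c x : incomparable a c -> prefix a x -> incomparable x c.
Proof.
move=> h hx; have h' := h; case/andP: h' => /negP n1 /negP n2.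
apply/andP; split; apply/negP => hh.
- by apply: n1; apply: prefix_trans hx hh.
- by case: (pre_cmp hx hh).
Qed.

Lemma prefix_cat2 (c a b : address) : prefix (c ++ a) (c ++ b) = prefix a b.
Proof. by rewrite prefix_catr // eqxx. Qed.

Lemma addr_lt_cat (c a b : address) : addr_lt (c ++ a) (c ++ b) = addr_lt a b.
Proof. by rewrite /addr_lt prefix_cat2 eqseq_cat // eqxx. Qed.

Lemma G1 F (T X : ptree F) c a0 b0 :
  coll (graft T c X) (c ++ a0) (c ++ b0) = graft T c (coll X a0 b0).
Proof.
apply: functional_extensionality => x.
case: (boolP (prefix (c ++ a0) x)) => hx.
- case/prefixP: hx => d ->; rewrite coll_at -!catA !graft_in.
  by rewrite coll_at.
- rewrite coll_out //; case: (boolP (prefix c x)) => hc; last by rewrite !graft_out.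
  case/prefixP: hc hx => y ->; rewrite prefix_cat2 => hy.
  by rewrite !graft_in coll_out.
Qed.

Lemma G2 F (T g : ptree F) c a b :
  incomparable a c -> prefix a b ->
  coll (graft T c g) a b = graft (coll T a b) c g.
Proof.
move=> hac hab; apply: functional_extensionality => x.
case: (boolP (prefix c x)) => hc.
- have hax : ~~ prefix a x.
    by apply/negP => hx; case/andP: (incomp_ext hac hx) => _ /negP [].
  by rewrite (graft_pre _ _ hc) coll_out // (graft_pre _ _ hc).
- rewrite (graft_out _ _ hc); case: (boolP (prefix a x)) => hx; last by rewrite !coll_out // graft_out.
  case/prefixP: hx => d ->; rewrite !coll_at graft_out //.
  apply/negP => h; have := incomp_ext hac (prefix_trans hab (pre_cat b d)).
  by case/andP => _ /negP [].
Qed.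

Lemma restrict_graft_out F (T g : ptree F) c x :
  incomparable x c -> restrict (graft T c g) x = restrict T x.
Proof.
move=> h; apply: functional_extensionality => y; rewrite /restrict graft_out //.
by apply/negP => hh; case/andP: (incomp_ext h (pre_cat x y)) => _ /negP [].
Qed.

Lemma restrict_graft_in F (T X : ptree F) c y :
  restrict (graft T c X) (c ++ y) = restrict X y.
Proof.
by apply: functional_extensionality => z; rewrite /restrict -catA graft_in.
Qed.

Lemma cc_graft_in F (T X : ptree F) c a0 b0 :
  cc (graft T c X) (c ++ a0) (c ++ b0) <-> cc X a0 b0.
Proof. by rewrite /cc !graft_in addr_lt_cat. Qed.

Lemma cc_graft_out F (T g : ptree F) c a b :
  incomparable a c -> incomparable b c -> cc (graft T c g) a b <-> cc T a b.
Proof.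
move=> ha hb; rewrite /cc !graft_out //.
- by case/andP: hb.
- by case/andP: ha.
Qed.

Lemma up_graft_in F (T X Y : ptree F) c : up X Y -> up (graft T c X) (graft T c Y).
Proof.
elim=> [x|x y [] beta a b ha hb hab hea|x y z _ IH1 _ IH2].
- exact: rtc_refl.
- apply: rtc_step; rewrite -[graft T c (graft beta a _)]/(graft T c (coll beta a b)) -G1.
  have: cc (graft T c beta) (c ++ a) (c ++ b) by apply/cc_graft_in.
  by case=> h1 h2 h3 h4; constructor.
- exact: rtc_trans IH1 IH2.
Qed.

Definition avoid F (c : address) (Y : ptree F) := forall y, Y y <> None -> incomparable y c.

Lemma avoid_coll F (Y : ptree F) a b c : cc Y a b -> avoid c Y -> avoid c (coll Y a b).
Proof.
case=> ha hb hab _ hY x; case: (boolP (prefix a x)) => hx.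
- move=> _; exact: incomp_ext (hY _ ha) hx.
- by rewrite coll_out //; apply: hY.
Qed.

Lemma up_avoid F (X Y : ptree F) c : up X Y -> avoid c Y -> avoid c X.
Proof.
elim=> // [x y [] beta a b ha hb hab hea|x y z _ IH1 _ IH2] h.
- by apply: (@avoid_coll _ beta a b).
- by apply: IH1; apply: IH2.
Qed.

Lemma up_graft_out F (X Y g : ptree F) c :
  up X Y -> avoid c Y -> up (graft X c g) (graft Y c g).
Proof.
elim=> [x|x y [] beta a b ha hb hab hea|x y z hxy IH1 hyz IH2] hav.
- exact: rtc_refl.
- apply: rtc_step.
  have hac := hav _ ha; have hbc := hav _ hb.
  rewrite -[graft (graft beta a _) c g]/(graft (coll beta a b) c g) -G2 //; last by case/andP: hab.
  have: cc (graft beta c g) a b by apply/cc_graft_out.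
  by case=> h1 h2 h3 h4; constructor.
- exact: rtc_trans (IH1 (up_avoid hyz hav)) (IH2 hav).
Qed.

Lemma up_support F (X Y : ptree F) : up X Y ->
  forall x, X x <> None -> exists2 y, Y y <> None & prefix y x.
Proof.
elim=> [x|x y [] beta a b ha hb hab hea|x y z _ IH1 _ IH2] w hw.
- by exists w => //; apply: prefix_refl.
- case: (boolP (prefix a w)) => hx; first by exists a.
  by exists w; [rewrite -(coll_out _ b hx) | apply: prefix_refl].
- have [y1 h1 p1] := IH1 _ hw; have [y2 h2 p2] := IH2 _ h1.
  by exists y2 => //; apply: prefix_trans p2 p1.
Qed.

Lemma star_restrict F (s : seq (address * ptree F)) (Z : ptree F) :
  pairwise incomparable (map fst s) ->
  (forall x, Z x <> None -> exists2 j, j < size s & prefix (adr s j) x) ->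
  bstar [seq (y.1, restrict Z y.1) | y <- s] = Z.
Proof.
move=> hp hZ; set s' := map _ s.
have hs : size s' = size s by rewrite size_map.
have ha j : j < size s -> adr s' j = adr s j.
  by move=> hj; rewrite /adr (nth_map ([::], bempty F)).
have hp' : pairwise incomparable (map fst s').
  by rewrite -map_comp; apply: hp.
apply: functional_extensionality => x.
case: (boolP (has (fun y => prefix y.1 x) s)).
- case/(has_nthP ([::], bempty F)) => j hj hpj.
  rewrite (@bstar_nth _ _ j) ?hs ?ha //.
  by rewrite /nth_bp (nth_map ([::], bempty F)) // /restrict /adr /= -(preP hpj).
- move=> hn; rewrite bstar_none.
  + case E: (Z x) => [v|] //; have hx : Z x <> None by rewrite E.
    have [j hj hpj] := hZ x hx.
    exfalso; move/negP: hn; apply.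
    by apply/(has_nthP ([::], bempty F)); exists j.
  + move=> j; rewrite hs => hj; rewrite ha //; apply/negP => hpj; move/negP: hn; apply.
    by apply/(has_nthP ([::], bempty F)); exists j.
Qed.

Lemma coll_self F (T : ptree F) a b : coll T a b a = T b.
Proof. by have := coll_at T a b [::]; rewrite !cats0. Qed.

Lemma coll_ne F (T : ptree F) a b : cc T a b -> nonempty (coll T a b).
Proof. by case=> _ hb _ _; exists a; rewrite coll_self. Qed.

Lemma star_ne F (s : seq (address * ptree F)) i :
  pairwise incomparable (map fst s) -> i < size s -> nonempty (nth_bp s i) ->
  nonempty (bstar s).
Proof.
move=> hp hi [e he]; exists (adr s i ++ e).
by rewrite (bstar_nth hp hi (pre_cat _ _)) drop_size_cat.
Qed.

Lemma bequiv_ne F (X Y : ptree F) : bequiv X Y -> nonempty X -> nonempty Y.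
Proof.
elim=> //.
- by move=> phi a1 a2 b1 b2 *; exists [::].
- move=> sa sb hs oka okb _ _ _ [i hi [_ hne]] _.
  by apply: (star_ne (star_ok_pw okb) _ hne); rewrite -hs.
Qed.

Lemma restrict_star F (s : seq (address * ptree F)) j z :
  pairwise incomparable (map fst s) -> j < size s ->
  restrict (bstar s) (adr s j ++ z) = restrict (nth_bp s j) z.
Proof. by move=> hp hj; rewrite {1}(star_self hp hj) restrict_graft_in. Qed.

Lemma coll_root F (T : ptree F) b : coll T [::] b = restrict T b.
Proof.
apply: functional_extensionality => x.
by rewrite /coll graft_pre ?prefix0s // drop0.
Qed.

Lemma bequiv_R F (X Y : ptree F) : bequiv X Y ->
  forall x, X x <> None -> exists y, Y y = X x /\ bequiv (restrict X x) (restrict Y y).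
Proof.
elim.
- by [].
- move=> phi [|i c] //= _; exists [::]; split => //; exact: bequiv_form.
- move=> phi a1 a2 b1 b2 n1 n2 n3 n4 e1 IH1 e2 IH2 [|[|[|[|i]]] c] //= h.
  + exists [::]; split => //; exact: bequiv_app.
  + have [y [hy hr]] := IH1 c h; by exists (1 :: y).
  + have [y [hy hr]] := IH2 c h; by exists (2 :: y).
- move=> sa sb hs oka okb _ _ IH _ x hx.
  have [j hj hpj] := bstar_some hx.
  have hpa := star_ok_pw oka; have hpb := star_ok_pw okb.
  rewrite (bstar_nth hpa hj hpj) in hx.
  have [y [hy hr]] := IH j hj _ hx.
  exists (adr sb j ++ y); split.
  + have hj' : j < size sb by rewrite -hs.
    rewrite (bstar_nth hpb hj' (pre_cat _ _)) drop_size_cat //.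
    by apply: (etrans hy); symmetry; apply: bstar_nth.
  + have -> : x = adr sa j ++ drop (size (adr sa j)) x by apply: preP.
    by rewrite restrict_star // restrict_star // -hs.
Qed.

Lemma coll_app1 F phi (A1 A2 : ptree F) a b :
  coll (bapp phi A1 A2) (1 :: a) (1 :: b) = bapp phi (coll A1 a b) A2.
Proof.
apply: functional_extensionality => x; rewrite /coll /graft /addr_le.
case: x => [|[|[|[|i]]] c] //=.
Qed.

Lemma coll_app2 F phi (A1 A2 : ptree F) a b :
  coll (bapp phi A1 A2) (2 :: a) (2 :: b) = bapp phi A1 (coll A2 a b).
Proof.
apply: functional_extensionality => x; rewrite /coll /graft /addr_le.
case: x => [|[|[|[|i]]] c] //=.
Qed.

Lemma addr_lt_cons (x : nat) a b : addr_lt (x :: a) (x :: b) = addr_lt a b.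
Proof. by rewrite /addr_lt prefix_cons eqxx eqseq_cons eqxx. Qed.

Lemma bequiv_E F (X Y : ptree F) : bequiv X Y -> forall a b, cc X a b ->
  exists a' b', [/\ cc Y a' b', Y a' = X a & bequiv (coll X a b) (coll Y a' b')].
Proof.
elim.
- by move=> a b [].
- move=> phi a b [ha hb hab _]; case: b hb hab => [|? ?] //= _.
  by rewrite /addr_lt prefixs0 andbN.
- move=> phi a1 a2 b1 b2 n1 n2 n3 n4 e1 IH1 e2 IH2 a b [ha hb hab hea].
  case: a ha hab hea => [|[|[|[|i]]] a] //= ha hab hea.
  + case: b hb hab hea => [|[|[|[|i]]] b] //= hb hab hea.
    * have [y [hy hr]] := bequiv_R e1 hb.
      exists [::], (1 :: y); split => //=; last by rewrite !coll_root.
      by split => //=; rewrite hy.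
    * have [y [hy hr]] := bequiv_R e2 hb.
      exists [::], (2 :: y); split => //=; last by rewrite !coll_root.
      by split => //=; rewrite hy.
  + case: b hb hab hea => [|[|[|[|i]]] b] //= hb; rewrite ?addr_lt_cons;
      try by rewrite /addr_lt /=.
    move=> hab hea.
    have [a' [b' [hc hv hq]]] := IH1 a b (And4 ha hb hab hea).
    exists (1 :: a'), (1 :: b'); split => //=.
    rewrite !coll_app1; apply: bequiv_app => //; exact: coll_ne.
  + case: b hb hab hea => [|[|[|[|i]]] b] //= hb; rewrite ?addr_lt_cons;
      try by rewrite /addr_lt /=.
    move=> hab hea.
    have [a' [b' [hc hv hq]]] := IH2 a b (And4 ha hb hab hea).
    exists (2 :: a'), (2 :: b'); split => //=.
    rewrite !coll_app2; apply: bequiv_app => //; exact: coll_ne.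
- move=> sa sb hs oka okb hnot hcomp IH hex a b [ha hb hab hea].
  have hpa := star_ok_pw oka; have hpb := star_ok_pw okb.
  have [j hj hpj] := bstar_some ha.
  have hj' : j < size sb by rewrite -hs.
  have hpjb : prefix (adr sa j) b by apply: prefix_trans hpj _; case/andP: hab.
  case/prefixP: hpj => a0 ea; case/prefixP: hpjb => b0 eb; subst a b.
  have hcc : cc (bstar sa) (adr sa j ++ a0) (adr sa j ++ b0) by split.
  rewrite (star_self hpa hj) in hcc; move/cc_graft_in: hcc => hcc.
  have [a0' [b0' [hc2 hv2 hq2]]] := IH j hj a0 b0 hcc.
  exists (adr sb j ++ a0'), (adr sb j ++ b0'); split.
  + by rewrite (star_self hpb hj'); apply/cc_graft_in.
  + rewrite (bstar_nth hpb hj' (pre_cat _ _)) drop_size_cat // hv2.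
    by rewrite (bstar_nth hpa hj (pre_cat _ _)) drop_size_cat.
  + rewrite {1}(star_self hpa hj) {1}(star_self hpb hj') !G1.
    rewrite -(bstar_set _ hpa hj) -(bstar_set _ hpb hj').
    apply: bequiv_star.
    * by rewrite !size_set.
    * exact: (star_ok_fst (esym (map_fst_set _ hj))).
    * exact: (star_ok_fst (esym (map_fst_set _ hj'))).
    * by rewrite !map_fst_set.
    * move=> k; rewrite size_set // => hk; rewrite !nth_bpE !nth_set_nth /=.
      by case: eqP => [_|_] //=; apply: hcomp.
    * exists j; first by rewrite size_set.
      rewrite !nth_bpE !nth_set_nth /= !eqxx /=.
      by split; apply: coll_ne.
Qed.

Lemma up1 F (Y : ptree F) a b : cc Y a b -> up (coll Y a b) Y.
Proof. by case=> *; apply: rtc_step; constructor. Qed.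

Lemma restrict_nil F (T : ptree F) : restrict T [::] = T.
Proof. by apply: functional_extensionality. Qed.

Lemma bstar_nil1 F (T : ptree F) : bstar [:: ([::], T)] = T.
Proof.
by apply: functional_extensionality => x; rewrite bstar1 graft_pre ?prefix0s // drop0.
Qed.

Lemma star_ok_nil1 F (T : ptree F) : star_ok [:: ([::], T)].
Proof. by split. Qed.

Lemma bapp1_graft F phi (A g : ptree F) : bapp phi A g = graft (bapp phi (bempty F) g) [:: 1] A.
Proof.
apply: functional_extensionality => x; rewrite /graft /addr_le.
by case: x => [|[|[|[|i]]] c] //=; rewrite prefix0s drop0.
Qed.

Lemma bapp2_graft F phi (A g : ptree F) : bapp phi g A = graft (bapp phi g (bempty F)) [:: 2] A.
Proof.
apply: functional_extensionality => x; rewrite /graft /addr_le.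
by case: x => [|[|[|[|i]]] c] //=; rewrite prefix0s drop0.
Qed.

Lemma up_app1 F phi (A B g : ptree F) : up A B -> up (bapp phi A g) (bapp phi B g).
Proof. by move=> h; rewrite (bapp1_graft phi A g) (bapp1_graft phi B g); apply: up_graft_in. Qed.

Lemma up_app2 F phi (A B g : ptree F) : up A B -> up (bapp phi g A) (bapp phi g B).
Proof. by move=> h; rewrite (bapp2_graft phi A g) (bapp2_graft phi B g); apply: up_graft_in. Qed.

Lemma star_avoid F (s : seq (address * ptree F)) c g :
  pairwise incomparable (map fst (rcons s (c, g))) -> avoid c (bstar s).
Proof.
rewrite map_rcons pairwise_rcons => /andP[ha hp] y hy.
have [j hj hpj] := bstar_some hy; apply: (incomp_ext _ hpj).
by move/(all_nthP [::]): ha => /(_ j); rewrite size_map (nth_map ([::], bempty F)) //; apply.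
Qed.

Lemma up_star_support F (s : seq (address * ptree F)) Z :
  up Z (bstar s) -> forall x, Z x <> None -> exists2 j, j < size s & prefix (adr s j) x.
Proof.
move=> hu x hx; have [y hy hyx] := up_support hu hx.
have [j hj hpj] := bstar_some hy; exists j => //; exact: prefix_trans hpj hyx.
Qed.

Lemma fst_restrict F (s : seq (address * ptree F)) (Z : ptree F) :
  map fst [seq (y.1, restrict Z y.1) | y <- s] = map fst s.
Proof. by rewrite -map_comp. Qed.

Lemma bcyc_mono F (X Y : ptree F) : bcyc 1 X Y -> forall x, X x <> None -> Y x = X x.
Proof.
elim.
- move=> abar bb gs; case: abar => [|a1 [|? ?]] //= _.
  case: gs => [|g1 [|g2 [|? ?]]] //= _ _ _ _ x.
  case: (boolP (prefix a1 x)) => hx; first by rewrite !bstar_cons_in.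
  by rewrite (@bstar_cons_out _ (a1, g1) [:: (bb, g2)] x hx) (@bstar_cons_out _ (a1, g1) [::] x hx) => h; exfalso; exact: h.
- by move=> phi sa sb g _ _ _ IH _ _ _ _ [|[|[|[|i]]] c] //= h; apply: IH.
- by move=> phi sa sb g _ _ _ IH _ _ _ _ [|[|[|[|i]]] c] //= h; apply: IH.
- move=> sa sb c g _ _ _ IH _ _ oka okb x.
  rewrite !bstar_rcons; try exact: star_ok_pw.
  case: (boolP (prefix c x)) => hx; first by rewrite !graft_pre.
  rewrite !graft_out //; exact: IH.
Qed.

Lemma bcyc_restrict F (X Y : ptree F) : bcyc 1 X Y -> forall x, X x <> None ->
  restrict X x = restrict Y x \/ bcyc 1 (restrict X x) (restrict Y x).
Proof.
elim.
- move=> abar bb gs; case: abar => [|a1 [|? ?]] //= _.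
  case: gs => [|g1 [|g2 [|? ?]]] //= _ _ _ _ x hx; left.
  apply: functional_extensionality => z; rewrite /restrict.
  case: (boolP (prefix a1 x)) => h; last by rewrite bstar_cons_out in hx.
  have h2 : prefix a1 (x ++ z) by apply: prefix_catl.
  by rewrite !bstar_cons_in.
- move=> phi sa sb g oka okb hc IH bpg neg nea neb [|[|[|[|i]]] c] //= h.
  + by rewrite !restrict_nil; right; apply: bcyc_app_l.
  + exact: IH.
  + by left.
- move=> phi sa sb g oka okb hc IH bpg neg nea neb [|[|[|[|i]]] c] //= h.
  + by rewrite !restrict_nil; right; apply: bcyc_app_r.
  + by left.
  + exact: IH.
- move=> sa sb c g oka okb hc IH bpg neg oka' okb' x.
  have hpa := star_ok_pw oka'; have hpb := star_ok_pw okb'.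
  rewrite !bstar_rcons //.
  case: (boolP (prefix c x)) => hx.
  + by case/prefixP: hx => y ->; rewrite !restrict_graft_in; left.
  + rewrite graft_out // => h.
    have hi := star_avoid hpa h.
    rewrite !restrict_graft_out //; exact: IH.
Qed.

Lemma star_coll F (s : seq (address * ptree F)) i a0 b0 :
  pairwise incomparable (map fst s) -> i < size s -> cc (nth_bp s i) a0 b0 ->
  cc (bstar s) (adr s i ++ a0) (adr s i ++ b0) /\
  coll (bstar s) (adr s i ++ a0) (adr s i ++ b0) =
    bstar (set_nth ([::], bempty F) s i (adr s i, coll (nth_bp s i) a0 b0)).
Proof.
move=> hp hi hc; rewrite {1 2}(star_self hp hi); split; first by apply/cc_graft_in.
by rewrite G1 bstar_set.
Qed.

Lemma cycA F (X Y : ptree F) : bcyc 1 X Y -> forall a b, cc X a b ->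
  exists Z, (Z = coll X a b \/ bcyc 1 (coll X a b) Z) /\ up Z Y.
Proof.
elim.
- move=> abar bb gs; case: abar => [|a1 [|? ?]] //= _.
  case: gs => [|g1 [|g2 [|? ?]]] //= _ ok heq hne a b hc.
  have hp := star_ok_pw ok.
  have e12 : bequiv g1 g2 := heq 0 isT.
  move: hc; rewrite bstar1 => hc.
  have [ha _ hab _] := hc.
  have pa : prefix a1 a by case: (boolP (prefix a1 a)) => // h; exfalso; apply: ha; rewrite graft_out.
  have pb : prefix a1 b by apply: prefix_trans pa _; case/andP: hab.
  case/prefixP: pa => a0 ea; case/prefixP: pb => b0 eb; subst a b.
  move/cc_graft_in: hc => hc.
  have [a0' [b0' [hc2 _ hq]]] := bequiv_E e12 hc.
  exists (bstar [:: (a1, coll g1 a0 b0); (bb, coll g2 a0' b0')]); split.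
  + right; rewrite G1 -bstar1.
    have := @bcyc_base F 1 [:: a1] bb [:: coll g1 a0 b0; coll g2 a0' b0'] erefl erefl.
    apply => /=.
    * exact: (star_ok_fst _ ok).
    * by move=> [|i] // _.
    * move/bequiv_ne => h; have [e he] := h (coll_ne hc2); exact: he.
  + have [c1 e1] := @star_coll _ [:: (a1, g1); (bb, g2)] 0 a0 b0 hp isT hc.
    have hp' : pairwise incomparable (map fst [:: (a1, coll g1 a0 b0); (bb, g2)]) by [].
    have [c2 e2] := @star_coll _ [:: (a1, coll g1 a0 b0); (bb, g2)] 1 a0' b0' hp' isT hc2.
    have u1 := up1 c1; rewrite e1 in u1.
    have u2 := up1 c2; rewrite e2 in u2.
    exact: rtc_trans u2 u1.
- move=> phi sa sb g oka okb hc IH bpg neg nea neb a b [ha hb hab hea].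
  case: a ha hab hea => [|[|[|[|i]]] a] //= ha.
  + case: b hb => [|[|[|[|i]]] b] //= hb hab hea; try by rewrite /addr_lt in hab.
    * exists (restrict (bstar sb) b); split.
      -- rewrite coll_root -[restrict (bapp _ _ _) _]/(restrict (bstar sa) b).
         by case: (bcyc_restrict hc hb) => [e|h]; [left; rewrite e | right].
      -- have hm := bcyc_mono hc hb.
         have hcc : cc (bapp phi (bstar sb) g) [::] (1 :: b) by split => //=; rewrite hm.
         have := up1 hcc; rewrite coll_root => h; exact: h.
    * exists (restrict g b); split; first by left; rewrite coll_root.
      have hcc : cc (bapp phi (bstar sb) g) [::] (2 :: b) by split => //=.
      have := up1 hcc; rewrite coll_root => h; exact: h.
  + case: b hb => [|[|[|[|i]]] b] //= hb hab hea; try by rewrite /addr_lt in hab.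
    rewrite addr_lt_cons in hab.
    have [Z0 [hr hu]] := IH a b (And4 ha hb hab hea).
    exists (bapp phi Z0 g); split; last exact: up_app1.
    rewrite coll_app1; case: hr => [->|hr]; first by left.
    right; have := @bcyc_app_l F 1 phi [:: ([::], coll (bstar sa) a b)] [:: ([::], Z0)] g.
    rewrite !bstar_nil1; apply => //; try exact: star_ok_nil1.
    * exact: coll_ne.
    * exists a; rewrite (bcyc_mono hr); rewrite coll_self //.
  + case: b hb => [|[|[|[|i]]] b] //= hb hab hea; try by rewrite /addr_lt in hab.
    rewrite addr_lt_cons in hab.
    have hcg : cc g a b by [].
    exists (bapp phi (bstar sb) (coll g a b)); split; last exact: up_app2 (up1 hcg).
    rewrite coll_app2; right; apply: bcyc_app_l => //.
    * exact: coll_bp.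
    * exact: coll_ne.
- move=> phi sa sb g oka okb hc IH bpg neg nea neb a b [ha hb hab hea].
  case: a ha hab hea => [|[|[|[|i]]] a] //= ha.
  + case: b hb => [|[|[|[|i]]] b] //= hb hab hea; try by rewrite /addr_lt in hab.
    * exists (restrict g b); split; first by left; rewrite coll_root.
      have hcc : cc (bapp phi g (bstar sb)) [::] (1 :: b) by split => //=.
      have := up1 hcc; rewrite coll_root => h; exact: h.
    * exists (restrict (bstar sb) b); split.
      -- rewrite coll_root -[restrict (bapp _ _ _) _]/(restrict (bstar sa) b).
         by case: (bcyc_restrict hc hb) => [e|h]; [left; rewrite e | right].
      -- have hm := bcyc_mono hc hb.
         have hcc : cc (bapp phi g (bstar sb)) [::] (2 :: b) by split => //=; rewrite hm.
         have := up1 hcc; rewrite coll_root => h; exact: h.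
  + case: b hb => [|[|[|[|i]]] b] //= hb hab hea; try by rewrite /addr_lt in hab.
    rewrite addr_lt_cons in hab.
    have hcg : cc g a b by [].
    exists (bapp phi (coll g a b) (bstar sb)); split; last exact: up_app1 (up1 hcg).
    rewrite coll_app1; right; apply: bcyc_app_r => //.
    * exact: coll_bp.
    * exact: coll_ne.
  + case: b hb => [|[|[|[|i]]] b] //= hb hab hea; try by rewrite /addr_lt in hab.
    rewrite addr_lt_cons in hab.
    have [Z0 [hr hu]] := IH a b (And4 ha hb hab hea).
    exists (bapp phi g Z0); split; last exact: up_app2.
    rewrite coll_app2; case: hr => [->|hr]; first by left.
    right; have := @bcyc_app_r F 1 phi [:: ([::], coll (bstar sa) a b)] [:: ([::], Z0)] g.
    rewrite !bstar_nil1; apply => //; try exact: star_ok_nil1.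
    * exact: coll_ne.
    * exists a; rewrite (bcyc_mono hr); rewrite coll_self //.
- move=> sa sb c g oka okb hc IH bpg neg oka' okb' a b hcc.
  have hpa := star_ok_pw oka'; have hpb := star_ok_pw okb'.
  move: hcc; rewrite (bstar_rcons hpa) (bstar_rcons hpb) => hcc.
  have [ha hb hab hea] := hcc.
  case: (boolP (prefix c a)) => hca.
  + have pb : prefix c b by apply: prefix_trans hca _; case/andP: hab.
    case/prefixP: hca => a0 ea; case/prefixP: pb => b0 eb; subst a b.
    move/cc_graft_in: hcc => hcg.
    exists (graft (bstar sb) c (coll g a0 b0)); split; last exact: up_graft_in (up1 hcg).
    rewrite G1; right.
    have e1 : map fst (rcons sa (c, g)) = map fst (rcons sa (c, coll g a0 b0)) by rewrite !map_rcons.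
    have e2 : map fst (rcons sb (c, g)) = map fst (rcons sb (c, coll g a0 b0)) by rewrite !map_rcons.
    have ok1 := star_ok_fst e1 oka'; have ok2 := star_ok_fst e2 okb'.
    rewrite -(bstar_rcons (star_ok_pw ok1)) -(bstar_rcons (star_ok_pw ok2)).
    apply: bcyc_star => //; [exact: coll_bp | exact: coll_ne].
  + have hXa : bstar sa a <> None by rewrite graft_out in ha.
    have hac : incomparable a c := star_avoid hpa hXa.
    have hbc : incomparable b c by apply: incomp_ext hac _; case/andP: hab.
    move: hcc; move/(cc_graft_out _ _ hac hbc) => hcs.
    have [Z0 [hr hu]] := IH a b hcs.
    have avb := star_avoid hpb.
    exists (graft Z0 c g); split; last exact: up_graft_out hu avb.
    rewrite G2 //; last by case/andP: hab.
    case: hr => [->|hr]; first by left.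
    right.
    have suC := up_star_support (up1 hcs).
    have suZ := up_star_support hu.
    have eC := star_restrict (star_ok_pw oka) suC.
    have eZ := star_restrict (star_ok_pw okb) suZ.
    have f1 := esym (fst_restrict sa (coll (bstar sa) a b)).
    have f2 := esym (fst_restrict sb Z0).
    have f1' : map fst (rcons sa (c, g)) =
               map fst (rcons [seq (y.1, restrict (coll (bstar sa) a b) y.1) | y <- sa] (c, g))
      by rewrite !map_rcons f1.
    have f2' : map fst (rcons sb (c, g)) =
               map fst (rcons [seq (y.1, restrict Z0 y.1) | y <- sb] (c, g))
      by rewrite !map_rcons f2.
    have okA := star_ok_fst f1 oka; have okB := star_ok_fst f2 okb.
    have okA' := star_ok_fst f1' oka'; have okB' := star_ok_fst f2' okb'.
    have := @bcyc_star F 1 _ _ c g okA okB.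
    rewrite (bstar_rcons (star_ok_pw okA')) (bstar_rcons (star_ok_pw okB')) eC eZ.
    by apply.
Qed.

Definition stp F (x y : ptree F) := bequiv x y \/ bcyc 1 x y.

Lemma stepA F (x y y' : ptree F) : up_step x y -> stp y y' ->
  exists x', (x' = x \/ stp x x') /\ up x' y'.
Proof.
case=> beta a b ha hb hab hea.
have hc : cc beta a b by [].
case=> [he|hcy].
- have [a' [b' [hc' _ hq]]] := bequiv_E he hc.
  exists (coll y' a' b'); split; [right; left; exact: hq | exact: up1].
- have [Z [[->|hr] hu]] := cycA hcy hc.
  + by exists (coll beta a b); split; [left|].
  + by exists Z; split; [right; right|].
Qed.

Lemma stepB F (x y : ptree F) : up x y -> forall y', stp y y' ->
  exists x', (x' = x \/ stp x x') /\ up x' y'.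
Proof.
elim.
- move=> z y' h; exists y'; split; [by right | exact: rtc_refl].
- move=> x0 y0 h y' hs; exact: stepA h hs.
- move=> x0 y0 z0 h1 IH1 h2 IH2 z' hs.
  have [y1 [[e|hy] hu]] := IH2 _ hs.
  + subst y1; exists x0; split; [by left | exact: rtc_trans h1 hu].
  + have [x1 [hx hu1]] := IH1 _ hy.
    exists x1; split => //; exact: rtc_trans hu1 hu.
Qed.

Lemma stepC F (b b' : ptree F) : bsqsub 1 b b' -> forall a, up a b ->
  exists a', bsqsub 1 a a' /\ up a' b'.
Proof.
elim.
- move=> z a h; exists a; split => //; exact: rtc_refl.
- move=> x0 y0 hs a hu.
  have [a' [[->|h] hu']] := stepB hu hs.
  + by exists a; split => //; apply: rtc_refl.
  + by exists a'; split => //; apply: rtc_step.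
- move=> x0 y0 z0 _ IH1 _ IH2 a hu.
  have [a1 [h1 hu1]] := IH1 _ hu.
  have [a2 [h2 hu2]] := IH2 _ hu1.
  exists a2; split => //; exact: rtc_trans h1 h2.
Qed.

Theorem lemma4p10 (F : Type) (alpha beta beta' : ptree F) :
  blueprint alpha -> blueprint beta -> blueprint beta' ->
  up alpha beta -> bsqsub 1 beta beta' ->
  exists alpha' : ptree F,
    blueprint alpha' /\ bsqsub 1 alpha alpha' /\ up alpha' beta'.
Proof.
move=> _ _ hb' hu hs.
have [a' [h1 h2]] := stepC hs hu.
exists a'; split; [exact: up_bp h2 hb' | by split].
Qed.
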